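(* For every integer $p\ge 2$, the loop $C_p$ is topolinear, i.e., its graph $\{(u,v,w)\in Q_{2p}^3: w=u\ast v\}$ is a topolinear set.
   Context: Let $Q_{2p}=\{x_\zeta : x\in\mathbb{Z}_p,\ \zeta\in\{0,1\}\}$. The loop $C_p$ is the operation on $Q_{2p}$ given by $x_\zeta\ast y_\xi=((-1)^\xi x+y+\zeta\xi)_{\zeta\oplus\xi}$, with subscripts modulo $2$ and the rest modulo $p$. An isotopism of $Q_{2p}^3$ is a map $(u,v,w)\mapsto(\tau_1u,\tau_2v,\tau_3w)$ with $\tau_i$ permutations of $Q_{2p}$; a set $A$ is topolinear if the group of isotopisms mapping $A$ onto $A$ contains a subgroup of cardinality $|A|$ acting transitively on $A$. *)

(* Defs.v *)
From HB Require Import structures.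
From mathcomp Require Import all_boot all_order all_algebra all_fingroup all_solvable.
Set Implicit Arguments. Unset Strict Implicit. Unset Printing Implicit Defensive.
Import GRing.Theory.
Local Open Scope ring_scope.

(* Q_{2p} = { x_zeta : x in Z_p, zeta in {0,1} }, encoded as pairs (x, zeta). *)
Definition Q2 (p : nat) : finType := ('Z_p * bool)%type.

Definition Cp (p : nat) (a b : Q2 p) : Q2 p :=
  let: (x, z) := a in let: (y, xi) := b in
  ((if xi then - x else x) + y + (z && xi)%:R, addb z xi).

Definition isotopism (T : finType) : finGroupType :=
  ({perm T} * {perm T} * {perm T})%type.

Definition iso_act (T : finType) (g : isotopism T) (t : T * T * T) : T * T * T :=
  (g.1.1 t.1.1, g.1.2 t.1.2, g.2 t.2).

Definition iso_stab (T : finType) (A : {set T * T * T}) : {set isotopism T} :=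
  [set g : isotopism T | iso_act g @: A == A].

Definition topolinear (T : finType) (A : {set T * T * T}) : Prop :=
  exists H : {group isotopism T},
    [/\ H \subset iso_stab A, #|H| = #|A| &
        forall a b, a \in A -> b \in A -> exists2 h, h \in H & iso_act h a = b].

Definition op_graph (T : finType) (op : T -> T -> T) : {set T * T * T} :=
  [set t : T * T * T | t.2 == op t.1.1 t.1.2].

(* Main.v *)
Require Import Defs.
From mathcomp Require Import all_boot all_order all_algebra all_fingroup all_solvable.
From mathcomp Require Import ring.
Set Implicit Arguments. Unset Strict Implicit. Unset Printing Implicit Defensive.
Import GRing.Theory.
Local Open Scope ring_scope.

Definition sgn (p : nat) (e : bool) : 'Z_p := if e then -1 else 1.

Lemma sgnK p e : sgn p e * sgn p e = 1.
Proof. by case: e; rewrite /sgn ?mulrNN mulr1. Qed.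

Definition affun p (e : bool) (k : bool -> 'Z_p) (f : bool) (q : Q2 p) : Q2 p :=
  (sgn p e * q.1 + k q.2, addb q.2 f).

Lemma affun_inj p e k f : injective (@affun p e k f).
Proof.
move=> [x z] [y w] E.
have H1 := congr1 fst E; have H2 := congr1 snd E.
move: H1 H2; cbn [fst snd affun] => H1 H2.
have zw : z = w by move: H2; case: (f); case: (z); case: (w).
subst w; have := congr1 (fun t => t - k z) H1; rewrite !addrK => {}H1.
by rewrite -[x]mul1r -[y]mul1r -(sgnK p e) -!mulrA H1.
Qed.

Definition affp p e k f : {perm Q2 p} := perm (@affun_inj p e k f).

Lemma affpE p e k f q : affp e k f q = @affun p e k f q.
Proof. by rewrite permE. Qed.

Definition homb p (g : isotopism (Q2 p)) : bool :=
  [forall u, forall v, g.2 (Cp u v) == Cp (g.1.1 u) (g.1.2 v)].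

Definition M1b p (s : {perm Q2 p}) : bool :=
  [exists e : bool, exists a : 'Z_p, exists al : bool,
     s == affp e (fun z => sgn p z * a) al].

Definition Hset p : {set isotopism (Q2 p)} :=
  [set g | homb g && M1b g.1.1].

Lemma Hset_group p : group_set (Hset p).
Proof.
apply/group_setP; split.
  rewrite inE; apply/andP; split.
    by apply/forallP=> u; apply/forallP=> v; rewrite /= !perm1.
  apply/existsP; exists false; apply/existsP; exists 0; apply/existsP; exists false.
  apply/eqP/permP=> [[x z]]; rewrite perm1 affpE /affun /sgn /= mulr0 addr0 mul1r addbF.
  by [].
move=> [[g1 g2] g3] [[h1 h2] h3]; rewrite !inE /= => /andP[Hg Mg] /andP[Hh Mh].
apply/andP; split.
  apply/forallP=> u; apply/forallP=> v; rewrite !permM.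
  move/forallP: Hg => /(_ u) /forallP /(_ v) /eqP ->.
  by move/forallP: Hh => /(_ (g1 u)) /forallP /(_ (g2 v)) /eqP ->.
case/existsP: Mg => e /existsP [a /existsP [al /eqP Eg]].
case/existsP: Mh => e' /existsP [a' /existsP [al' /eqP Eh]].
apply/existsP; exists (addb e e'); apply/existsP; exists (sgn p e' * a + sgn p al * a').
apply/existsP; exists (addb al al'); apply/eqP/permP => [[x z]].
rewrite permM Eg Eh !affpE /affun /=.
congr (_, _); last by rewrite addbA.
by case: (e); case: (e'); case: (al); case: (z); rewrite /sgn /=; ring.
Qed.

Canonical Hgrp p := Group (Hset_group p).

Definition base p : Q2 p * Q2 p * Q2 p := ((0, false), (0, false), (0, false)).

Lemma Cp_u0 p (u : Q2 p) : Cp u (0, false) = u.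
Proof. by case: u => x z; rewrite /Cp addr0 andbF addr0 addbF. Qed.

Lemma Cp_0v p (v : Q2 p) : Cp (0, false) v = v.
Proof. by case: v => y w; rewrite /Cp /= addr0; case: (w); rewrite ?oppr0 add0r. Qed.

Lemma homP p (g : isotopism (Q2 p)) u v : homb g -> g.2 (Cp u v) = Cp (g.1.1 u) (g.1.2 v).
Proof. by move/forallP => /(_ u) /forallP /(_ v) /eqP. Qed.

Lemma hom_act p (g : isotopism (Q2 p)) t :
  homb g -> t \in op_graph (@Cp p) -> iso_act g t \in op_graph (@Cp p).
Proof.
move=> Hg; rewrite !inE; case: t => [[u v] w] /= /eqP ->.
by rewrite /iso_act /= (homP _ _ Hg).
Qed.

Lemma iso_act_inj p (g : isotopism (Q2 p)) : injective (iso_act g).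
Proof.
move=> [[u v] w] [[u' v'] w'] /=; rewrite /iso_act /= => [[]].
by move/perm_inj => -> /perm_inj -> /perm_inj ->.
Qed.

Lemma homb_stab p g : homb g -> g \in iso_stab (op_graph (@Cp p)).
Proof.
move=> Hg; rewrite inE eqEcard card_imset; last exact: iso_act_inj.
rewrite leqnn andbT; apply/subsetP => t /imsetP [s Hs ->].
exact: hom_act.
Qed.

Lemma iso_actM p (g h : isotopism (Q2 p)) t : iso_act (g * h)%g t = iso_act h (iso_act g t).
Proof. by case: g h t => [[g1 g2] g3] [[h1 h2] h3] [[u v] w]; rewrite /iso_act /= !permM. Qed.

Lemma iso_actK p (g : isotopism (Q2 p)) t : iso_act (g^-1)%g (iso_act g t) = t.
Proof. by case: g t => [[g1 g2] g3] [[u v] w]; rewrite /iso_act /= !permK. Qed.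

Lemma fix_base p g : g \in Hset p -> iso_act g (base p) = base p -> g = 1%g.
Proof.
case: g => [[t1 t2] t3]; rewrite inE /= => /andP [Hg M].
rewrite /iso_act /base /= => [[E1 E2 E3]].
case/existsP: M => e /existsP [a /existsP [al /eqP Et1]].
have H u v := homP u v Hg; rewrite /= in H.
move: E1; rewrite Et1 affpE /affun /= mulr0 add0r /sgn mul1r => [[Ea Eal]].
subst a al.
have H31 u : t3 u = t1 u by rewrite -[u in LHS]Cp_u0 H E2 Cp_u0.
have H32 v : t3 v = t2 v.
  rewrite -[v in LHS]Cp_0v H Et1 affpE /affun /=.
  by rewrite mulr0 mul1r addr0; case: (t2 v) => y xi; case: xi; rewrite ?oppr0 add0r addr0.
have T1 x z : t1 (x, z) = (sgn p e * x, z).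
  by rewrite Et1 affpE /affun /= mulr0 addr0 addbF.
have Ee : sgn p e = 1.
  have := H (1, true) (1, true).
  rewrite -H32 !H31 !T1 /Cp /=.
  have -> : - 1 + 1 + 1 = 1 :> 'Z_p by ring.
  have -> : - (sgn p e * 1) + sgn p e * 1 + 1 = 1 :> 'Z_p by ring.
  by rewrite mulr1 => [[]].
have T1' q : t1 q = q by case: q => x z; rewrite T1 Ee mul1r.
have P1 : t1 = 1%g by apply/permP => q; rewrite perm1 T1'.
have P2 : t2 = 1%g by apply/permP => q; rewrite perm1 -H32 H31 T1'.
have P3 : t3 = 1%g by apply/permP => q; rewrite perm1 H31 T1'.
by rewrite -Et1 P1 P2 P3.
Qed.

Definition phi p (a b : 'Z_p) (al be : bool) : isotopism (Q2 p) :=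
  ((affp (addb al be) (fun z => sgn p z * a) al,
    affp al (fun z => b + (be%:R - al%:R) * z%:R) be),
   affp al (fun t => sgn p (addb t be) * a + b + (be && addb t al)%:R) (addb al be)).

Lemma phi_in p a b al be : @phi p a b al be \in Hset p.
Proof.
rewrite inE; apply/andP; split; last first.
  by apply/existsP; exists (addb al be); apply/existsP; exists a; apply/existsP; exists al.
apply/forallP => [[x z]]; apply/forallP => [[y w]]; apply/eqP.
rewrite /phi /= !affpE /affun /Cp /=.
congr (_, _); last by case: (al); case: (be); case: (z); case: (w).
by case: (al); case: (be); case: (z); case: (w); rewrite /sgn /=; ring.
Qed.

Lemma base_in p : base p \in op_graph (@Cp p).
Proof. by rewrite inE; apply/eqP; rewrite /base; exact: (esym (Cp_u0 _)). Qed.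

Lemma surj p t : t \in op_graph (@Cp p) -> exists2 g, g \in Hset p & iso_act g (base p) = t.
Proof.
case: t => [[[x z] [y w]] c]; rewrite inE /= => /eqP Ec.
exists (phi x y z w); first exact: phi_in.
have Hg : homb (phi x y z w) by move: (phi_in x y z w); rewrite inE => /andP[].
have := hom_act Hg (base_in p).
have E1 : (iso_act (phi x y z w) (base p)).1.1 = (x, z).
  rewrite /iso_act /phi /base /= affpE /affun /= mulr0 add0r mul1r.
  by [].
have E2 : (iso_act (phi x y z w) (base p)).1.2 = (y, w).
  rewrite /iso_act /phi /base /= affpE /affun /=.
  by rewrite !mulr0 add0r addr0.
case: (iso_act _ _) E1 E2 => [[q1 q2] q3] /= -> ->.
by rewrite inE /= Ec => /eqP ->.
Qed.

Theorem corollary1 (p : nat) (hp : (2 <= p)%N) : topolinear (op_graph (@Cp p)).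
Proof.
set A := op_graph (@Cp p).
set f := fun g : isotopism (Q2 p) => iso_act g (base p).
have HH : forall g, g \in Hset p -> homb g by move=> g; rewrite inE => /andP[].
have Him : f @: Hset p = A.
  apply/eqP; rewrite eqEsubset; apply/andP; split.
    apply/subsetP => t /imsetP [g Hg ->]; exact: hom_act (HH g Hg) (base_in p).
  apply/subsetP => t /surj [g Hg <-]; exact: imset_f.
have Hinj : {in Hset p &, injective f}.
  move=> g h Hg Hh Efg.
  have Hk : (h * g^-1)%g \in Hset p by rewrite groupM ?groupV.
  have := fix_base Hk; rewrite iso_actM -/(f h) -Efg /f iso_actK => /(_ erefl) Ek.
  by rewrite -(mulgKV g h) Ek mul1g.
exists (Group (Hset_group p)); split => /=.
- apply/subsetP => g Hg; exact: homb_stab (HH g Hg).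
- by rewrite -Him card_in_imset.
- move=> a b /surj [g1 Hg1 <-] /surj [g2 Hg2 <-].
  exists (g1^-1 * g2)%g; first by rewrite groupM ?groupV.
  by rewrite iso_actM iso_actK.
Qed.
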